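(* Let $S$ be a finite, additively commutative, congruence-simple semiring with an infinity $\infty$ and with $|S|>2$. Then one of the following holds: (1) $S$ is additively idempotent, i.e. $x+x=x$ for all $x\in S$; (2) $x+y=\infty$ for all $x,y\in S$, and $(S,\cdot)$ is a congruence-free semigroup.
   Context: A semiring is a nonempty set $S$ with two associative binary operations $+$ and $\cdot$ satisfying both distributive laws $a(b+c)=ab+ac$ and $(a+b)c=ac+bc$; no identity elements are assumed. It is additively commutative if $(S,+)$ is commutative. An infinity of $S$ is an element $\infty$ with $\infty+x=x+\infty=\infty$ and $\infty x=x\infty=\infty$ for all $x\in S$. A congruence relation on $S$ is an equivalence relation $\sim$ such that $x_1\sim x_2$ implies $c+x_1\sim c+x_2$, $x_1+c\sim x_2+c$, $cx_1\sim cx_2$, $x_1c\sim x_2c$ for all $c\in S$. $S$ is congruence-simple if its only congruence relations are the identity relation and $S\times S$. A semigroup is congruence-free if its only congruences (equivalence relations compatible with left and right multiplication) are the identity relation and the full relation. *)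

(* Defs.v *)
From mathcomp Require Import all_boot.
Set Implicit Arguments. Unset Strict Implicit. Unset Printing Implicit Defensive.

Definition is_semiring (T : Type) (add mul : T -> T -> T) : Prop :=
  (forall a b c, add a (add b c) = add (add a b) c) /\
  (forall a b c, mul a (mul b c) = mul (mul a b) c) /\
  (forall a b c, mul a (add b c) = add (mul a b) (mul a c)) /\
  (forall a b c, mul (add a b) c = add (mul a c) (mul b c)).

Definition add_comm (T : Type) (add : T -> T -> T) : Prop :=
  forall a b, add a b = add b a.

Definition is_infinity (T : Type) (add mul : T -> T -> T) (inf : T) : Prop :=
  forall x, add inf x = inf /\ add x inf = inf /\ mul inf x = inf /\ mul x inf = inf.

Definition is_equivalence (T : Type) (r : T -> T -> Prop) : Prop :=
  (forall x, r x x) /\ (forall x y, r x y -> r y x) /\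
  (forall x y z, r x y -> r y z -> r x z).

Definition semiring_congruence (T : Type) (add mul : T -> T -> T)
  (r : T -> T -> Prop) : Prop :=
  is_equivalence r /\
  forall x1 x2 c, r x1 x2 ->
    r (add c x1) (add c x2) /\ r (add x1 c) (add x2 c) /\
    r (mul c x1) (mul c x2) /\ r (mul x1 c) (mul x2 c).

Definition semigroup_congruence (T : Type) (mul : T -> T -> T)
  (r : T -> T -> Prop) : Prop :=
  is_equivalence r /\
  forall x1 x2 c, r x1 x2 -> r (mul c x1) (mul c x2) /\ r (mul x1 c) (mul x2 c).

Definition congruence_simple (T : Type) (add mul : T -> T -> T) : Prop :=
  forall r, semiring_congruence add mul r ->
    (forall x y, r x y -> x = y) \/ (forall x y, r x y).

Definition congruence_free (T : Type) (mul : T -> T -> T) : Prop :=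
  forall r, semigroup_congruence mul r ->
    (forall x y, r x y -> x = y) \/ (forall x y, r x y).

(* Main.v *)
Require Import Defs.
From mathcomp Require Import all_boot.
From mathcomp Require Import fingroup perm.
From mathcomp Require Import zify.

Fixpoint ns (T : Type) (add : T -> T -> T) (j : nat) (x : T) : T :=
  match j with 0 => x | j'.+1 => add x (@ns T add j' x) end.
Arguments ns {T}.

Theorem lemma3p1 (S : finType) (add mul : S -> S -> S) (inf : S) :
  is_semiring add mul -> add_comm add -> congruence_simple add mul ->
  is_infinity add mul inf -> 2 < #|S| ->
  (forall x, add x x = x) \/
  ((forall x y, add x y = inf) /\ congruence_free mul).
Proof.
move=> [aA [mA [dl dr]]] aC simple hinf hcard.
have iL x : add inf x = inf by case: (hinf x).
have iR x : add x inf = inf by case: (hinf x) => _ [].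
have swap4 a b c d : add (add a b) (add c d) = add (add a c) (add b d).
  by rewrite -!aA; congr add; rewrite !aA (aC b c).
have nsD j a b : ns add j (add a b) = add (ns add j a) (ns add j b).
  elim: j => [|j IH] //=; by rewrite IH swap4.
have nsMl j c x : ns add j (mul c x) = mul c (ns add j x).
  elim: j => [|j IH] //=; by rewrite IH dl.
have nsMr j c x : ns add j (mul x c) = mul (ns add j x) c.
  elim: j => [|j IH] //=; by rewrite IH dr.
have nsadd i j x : ns add (i + j).+1 x = add (ns add i x) (ns add j x).
  elim: i => [|i IH] //; rewrite addSn; change (add x (ns add (i + j).+1 x) = add (add x (ns add i x)) (ns add j x)); by rewrite IH aA.
have nsinf j : ns add j inf = inf by elim: j => [|j IH] //=; rewrite IH iL.
have nsid j e : add e e = e -> ns add j e = e.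
  by move=> He; elim: j => [|j IH] //=; rewrite IH He.
have Rn n : semiring_congruence add mul (fun x y => ns add n x = ns add n y).
  split; first by split; [|split] => // x y z -> .
  move=> x1 x2 c H; split; [|split; [|split]].
  + by rewrite !nsD H.
  + by rewrite !nsD H.
  + by rewrite !nsMl H.
  + by rewrite (nsMr n c x1) (nsMr n c x2) H.
have other (x : S) : exists y, y != x.
  have /card_gt1P [a [b [_ _ ab]]] : 1 < #|S| by lia.
  case: (eqVneq a x) => [ax|]; last by exists a.
  by exists b; rewrite -ax eq_sym.
case: (simple _ (Rn 1)) => [Hid | Hfull].
- left.
  have dinj : injective (fun x => add x x) by move=> x y /Hid.
  pose p := perm dinj.
  have iterQ m : exists Q, (0 < m -> 0 < Q) /\ forall x, iter m (fun x => add x x) x = ns add Q x.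
    elim: m => [|m [Q [HQ IH]]]; first by exists 0.
    exists (Q + Q).+1; split => // x.
    by rewrite iterS IH nsadd.
  have [Q [HQ HQx]] := iterQ #[p]%g.
  have Q0 := HQ (order_gt0 p).
  have fix1 x : ns add Q x = x.
    rewrite -HQx.
    have -> : iter #[p]%g (fun x => add x x) x = iter #[p]%g p x by apply: eq_iter => y; rewrite permE.
    by rewrite -permX (expg_order p) perm1.
  pose e x := ns add Q.-1 x.
  have ex x : add (e x) x = x.
    have := nsadd Q.-1 0 x; rewrite addn0 prednK // fix1 => h.
    symmetry; exact: h.
  have ej x j : add (e x) (ns add j x) = ns add j x.
    elim: j => [|j IH] /=; first exact: ex.
    by rewrite aA ex.
  have ee x : add (e x) (e x) = e x by rewrite {2}/e ej.
  case: (simple _ (Rn Q.-1)) => [Hid2 | Hfull2].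
  + move=> x.
    have exx : e x = x.
      apply: Hid2; rewrite nsid //; exact: ee.
    by rewrite -exx ee.
  + exfalso.
    have allinf x : x = inf.
      have : e x = inf by rewrite /e (Hfull2 x inf) nsinf.
      by move=> h; rewrite -(ex x) h iL.
    have [y] := other inf; by rewrite (allinf y) eqxx.
- right.
  have dd x : add x x = inf.
    have := Hfull x inf; by rewrite /= iL.
  have fixinf x t : x = add x t -> x = inf.
    by move=> h; rewrite h {1}h -aA dd iR.
  pose isSum z := exists a b, z = add a b.
  have Rees : semiring_congruence add mul (fun x y => x = y \/ (isSum x /\ isSum y)).
    split.
      split; first by left.
      split; first by move=> x y [h|[h1 h2]]; [left|right].
      move=> x y z [h1|[hx hy]] [h2|[hy' hz]].
      * by left; rewrite h1 h2.
      * by right; rewrite h1.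
      * by right; rewrite -h2.
      * by right.
    move=> x1 x2 c [->|[[a1 [b1 ->]] [a2 [b2 ->]]]]; first by split; [left|split;[left|split;left]].
    split; [right|split; [right|split; right]].
    + by split; [exists (add c a1), b1|exists (add c a2), b2]; rewrite aA.
    + by split; [exists a1, (add b1 c)|exists a2, (add b2 c)]; rewrite aA.
    + by split; [exists (mul c a1), (mul c b1)|exists (mul c a2), (mul c b2)]; rewrite dl.
    + by split; [exists (mul a1 c), (mul b1 c)|exists (mul a2 c), (mul b2 c)]; rewrite dr.
  case: (simple _ Rees) => [HR | HR].
  + have sumsinf x y : add x y = inf.
      apply: HR; right; split; [by exists x, y | by exists inf, inf; rewrite iL].
    split => // r [req rc].
    apply: simple; split => // x1 x2 c H.
    have [h1 h2] := rc _ _ c H.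
    rewrite !sumsinf; split; [|split] => //; by case: req.
  + exfalso.
    have allsum x : isSum x.
      have [y yx] := other x.
      case: (HR x y) => [xy|[]//]; by rewrite xy eqxx in yx.
    pose D x := [set y | (y == x) || [exists s, y == add x s]].
    have [i0 i0inf] := other inf.
    case: (@arg_maxnP S i0 (fun i => i != inf) (fun i => #|D i|) i0inf) => x xinf xmax.
    have [a [b xab]] := allsum x.
    have ainf : a != inf.
      apply/eqP => ai; move: xinf; by rewrite xab ai iL eqxx.
    have : #|D x| < #|D a|.
      apply: proper_card; apply/properP; split.
        apply/subsetP => y; rewrite !inE => /orP [/eqP ->|/existsP [s /eqP ->]];
          apply/orP; right; apply/existsP.
        * by exists b; rewrite xab.
        * by exists (add b s); rewrite xab aA.
      exists a; first by rewrite inE eqxx.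
      rewrite inE; apply/negP => /orP [/eqP ax| /existsP [s /eqP ax]].
      * move: xinf; rewrite (fixinf x b) ?eqxx //; by rewrite {1}xab ax.
      * move: xinf; rewrite (fixinf x (add s b)) ?eqxx //; by rewrite {1}xab ax -aA.
    have := xmax a ainf; rewrite /geq /= => h; by rewrite ltnNge h.
Qed.
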